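(* Let $H\in\mathbb{C}^{n\times n}$ be a Hermitian positive-definite matrix. Then $H$ is complex orthogonal, i.e. $H H^T = H^T H = \mathbb{I}_n$, if and only if there exists a complex orthogonal matrix $R\in\mathbb{C}^{n\times n}$ ($R R^T = R^T R = \mathbb{I}_n$) such that $H = R^\dagger R$.
   Context: $^T$ denotes transpose, $^\dagger$ conjugate transpose, $\mathbb{I}_n$ the $n\times n$ identity. *)

(* Defs.v *)
From HB Require Import structures.
From mathcomp Require Import all_boot all_order all_algebra.
From mathcomp Require Import reals.
From mathcomp Require Import complex.
Set Implicit Arguments. Unset Strict Implicit. Unset Printing Implicit Defensive.
Import Order.TTheory GRing.Theory Num.Theory.
Local Open Scope ring_scope.

Definition conjT (C : numClosedFieldType) (m n : nat) (A : 'M[C]_(m, n)) : 'M[C]_(n, m) :=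
  (map_mx Num.conj A)^T.

Definition hermitian (C : numClosedFieldType) (n : nat) (H : 'M[C]_n) : Prop :=
  conjT H = H.

Definition herm_posdef (C : numClosedFieldType) (n : nat) (H : 'M[C]_n) : Prop :=
  hermitian H /\
  forall v : 'cV[C]_n, v != 0 -> 0 < (conjT v *m H *m v) ord0 ord0.

Definition complex_orthogonal (C : numClosedFieldType) (n : nat) (A : 'M[C]_n) : Prop :=
  A *m A^T = 1%:M /\ A^T *m A = 1%:M.

(* Main.v *)
Require Import Defs.
From HB Require Import structures.
From mathcomp Require Import all_boot all_order all_algebra.
From mathcomp Require Import reals.
From mathcomp Require Import complex.
Import Order.TTheory GRing.Theory Num.Theory.
Local Open Scope ring_scope.
Local Open Scope complex_scope.

Section Aux.
Variable C : numClosedFieldType.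

Lemma conjTM m n p (A : 'M[C]_(m, n)) (B : 'M[C]_(n, p)) :
  conjT (A *m B) = conjT B *m conjT A.
Proof. by rewrite /conjT map_mxM trmx_mul. Qed.

Lemma conjTK m n (A : 'M[C]_(m, n)) : conjT (conjT A) = A.
Proof. by apply/matrixP => i j; rewrite !mxE conjCK. Qed.

Lemma conjT1 n : conjT (1%:M : 'M[C]_n) = 1%:M.
Proof. by rewrite /conjT map_mx1 trmx1. Qed.

Lemma conjT_sesq n (A : 'M[C]_n) : conjT A = (A ^t Num.conj)%sesqui.
Proof. by rewrite /conjT map_trmx. Qed.

Lemma trconjT m n (A : 'M[C]_(m, n)) : (conjT A)^T = map_mx Num.conj A.
Proof. by rewrite /conjT trmxK. Qed.

Lemma mapconj1 n : map_mx Num.conj (1%:M : 'M[C]_n) = 1%:M.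
Proof. by rewrite map_mx1. Qed.

Lemma conjTE m n (A : 'M[C]_(m, n)) : conjT A = map_mx Num.conj (A^T).
Proof. by apply/matrixP => i j; rewrite !mxE. Qed.


Lemma diag_entry n (d : 'rV[C]_n) (i : 'I_n) :
  ((delta_mx 0 i : 'rV[C]_n) *m diag_mx d *m (delta_mx i 0 : 'cV[C]_n)) ord0 ord0 = d 0 i.
Proof.
have -> : delta_mx 0 i *m diag_mx d = d 0 i *: (delta_mx 0 i : 'rV[C]_n).
  apply/matrixP => a b; rewrite mul_mx_diag !mxE.
  by case: (eqVneq b i) => [->|]; rewrite ?andbT ?andbF ?mul0r ?mulr0 // mulrC.
by rewrite -scalemxAl mul_delta_mx !mxE !eqxx mulr1.
Qed.

Lemma main_dir n (H : 'M[C]_n) : conjT H = H ->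
  (forall v : 'cV[C]_n, v != 0 -> 0 < (conjT v *m H *m v) ord0 ord0) ->
  H *m H^T = 1%:M ->
  exists Q : 'M[C]_n, (Q *m Q^T = 1%:M /\ Q^T *m Q = 1%:M) /\ H = conjT Q *m Q.
Proof.
move=> Hh Hpos HH1.
have Hn : H \is normalmx by apply/normalmxP; rewrite -conjT_sesq Hh.
have /orthomx_spectralP HE := Hn.
set P := spectralmx H in HE; set d := spectral_diag H in HE.
have PU : P *m conjT P = 1%:M.
  by rewrite conjT_sesq; have /unitarymxP := spectral_unitarymx H.
have PU2 : conjT P *m P = 1%:M := mulmx1C PU.
have invP : invmx P = conjT P.
  by rewrite conjT_sesq invmx_unitary // spectral_unitarymx.
have {}HE : H = conjT P *m diag_mx d *m P by rewrite {1}HE invP.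
have key : forall w : 'cV[C]_n,
    conjT (conjT P *m w) *m H *m (conjT P *m w) = conjT w *m diag_mx d *m w.
  move=> w; rewrite HE conjTM conjTK !mulmxA -(mulmxA _ P (conjT P)) PU mulmx1.
  by rewrite -(mulmxA _ P (conjT P)) PU mulmx1.
have dpos : forall i, 0 < d 0 i.
  move=> i; have := Hpos (conjT P *m delta_mx i 0).
  rewrite key.
  have -> : conjT (delta_mx i 0 : 'cV[C]_n) = delta_mx 0 i.
    by apply/matrixP => a b; rewrite !mxE rmorph_nat andbC.
  move=> h; rewrite -(diag_entry _ d i); apply: h.
  apply/eqP => h0.
  have := congr1 (mulmx P) h0; rewrite mulmxA PU mul1mx mulmx0.
  move/matrixP/(_ i 0); rewrite !mxE !eqxx /=.
  by move/eqP; rewrite oner_eq0.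
have dreal : forall i, Num.conj (d 0 i) = d 0 i.
  by move=> i; apply/conj_Creal/ger0_real/ltW.
pose e := \row_j sqrtC (d 0 j).
have e_ge0 : forall j, 0 <= e 0 j.
  by move=> j; rewrite mxE sqrtC_ge0 ltW.
have EE : diag_mx e *m diag_mx e = diag_mx d.
  rewrite mulmx_diag; congr diag_mx; apply/rowP => j.
  by rewrite !mxE -expr2 sqrtCK.
have cE : conjT (diag_mx e) = diag_mx e.
  rewrite /conjT map_diag_mx tr_diag_mx; congr diag_mx; apply/rowP => j.
  by rewrite !mxE; apply/conj_Creal/ger0_real; rewrite sqrtC_ge0 ltW.
have trP : (conjT P)^T = map_mx Num.conj P by rewrite trconjT.
have cPP : map_mx Num.conj P *m P^T = 1%:M.
  apply: mulmx1C; rewrite -trP -trmx_mul PU2 trmx1 //.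
have DUD : diag_mx d *m (P *m P^T) *m diag_mx d = P *m P^T.
  have := congr1 (fun M => P *m M *m P^T) HH1.
  rewrite /= mulmx1 HE !trmx_mul tr_diag_mx trP !mulmxA PU mul1mx.
  by rewrite -mulmxA cPP mulmx1.
have EUE : diag_mx e *m (P *m P^T) *m diag_mx e = P *m P^T.
  move: DUD; move: (P *m P^T) => U DUD.
  apply/matrixP => i j; move/matrixP/(_ i j): DUD.
  rewrite !mul_mx_diag !mul_diag_mx !mxE.
  set u := U i j.
  have [->|u0] := eqVneq u 0; first by rewrite !mulr0 !mul0r.
  move=> h.
  have dd : d 0 i * d 0 j = 1.
    apply/eqP; rewrite -subr_eq0; apply/eqP.
    apply: (mulIf u0); rewrite mul0r mulrBl mul1r.
    by rewrite -{2}h -mulrA (mulrC u) mulrA subrr.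
  have ee : sqrtC (d 0 i) * sqrtC (d 0 j) = 1.
    apply/eqP; rewrite -sqrp_eq1 ?mulr_ge0 ?sqrtC_ge0 ?ltW //.
    by rewrite exprMn !sqrtCK dd.
  by rewrite -mulrA (mulrC u) mulrA ee mul1r.
exists (conjT P *m diag_mx e *m P).
have QQ : (conjT P *m diag_mx e *m P) *m (conjT P *m diag_mx e *m P)^T = 1%:M.
  rewrite !trmx_mul tr_diag_mx trP.
  have -> : conjT P *m diag_mx e *m P *m (P^T *m (diag_mx e *m map_mx Num.conj P))
      = conjT P *m (diag_mx e *m (P *m P^T) *m diag_mx e) *m map_mx Num.conj P.
    by rewrite !mulmxA.
  by rewrite EUE !mulmxA PU2 mul1mx; apply: mulmx1C.
split; first by split=> //; apply: mulmx1C.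
rewrite !conjTM conjTK cE HE.
by rewrite !mulmxA -(mulmxA _ P (conjT P)) PU mulmx1 -(mulmxA _ (diag_mx e) (diag_mx e)) EE.
Qed.

End Aux.

Theorem theorem1 (R : realType) (n : nat) (H : 'M[R[i]]_n) :
  herm_posdef H ->
  (complex_orthogonal H <->
   exists Q : 'M[R[i]]_n, complex_orthogonal Q /\ H = conjT Q *m Q).
Proof.
move=> [Hh Hpos]; split; last first.
  move=> [Q [[QQ1 QQ2] ->]].
  have HHT : conjT Q *m Q *m (conjT Q *m Q)^T = 1%:M.
    rewrite trmx_mul trconjT mulmxA -(mulmxA _ Q) QQ1 mulmx1.
    by rewrite conjTE -map_mxM QQ2 map_mx1.
  by split=> //; apply: mulmx1C.
move=> [HH1 HH2].
have [Q [QO HQ]] := @main_dir _ _ H Hh Hpos HH1.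
exists Q; split=> //.
Qed.
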